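(* Let $\Gamma=\langle A,B\rangle\subset\mathrm{PSL}_2(\mathbb{Z}[i])$ with $A=\begin{pmatrix}1&1\\0&1\end{pmatrix}$, $B=\begin{pmatrix}1&0\\ 1+i&1\end{pmatrix}$. If $X,Y\in\Gamma$ satisfy $\Gamma=\langle X,Y\rangle$ and $\mathrm{tr}\,X=\mathrm{tr}\,Y$, then $X$ and $Y$ are parabolic.
   Context: $\Gamma$ is the image of the discrete faithful representation of the Whitehead link group into $\mathrm{PSL}_2\mathbb{C}$; it is a finite-covolume Kleinian group with traces in $\mathbb{Z}[i]$, the ring of integers of its trace field $\mathbb{Q}(i)$. Traces are taken of lifts to $\mathrm{SL}_2\mathbb{C}$; ''$\mathrm{tr}\,X=\mathrm{tr}\,Y$'' means the elements admit lifts of equal trace. Parabolic means non-identity with $\mathrm{tr}^2=4$. *)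

(* Defs.v *)
(* Matrices over algC (Z[i] is a subring of algC). *)
From HB Require Import structures.
From mathcomp Require Import all_boot all_order all_algebra all_field.
Set Implicit Arguments. Unset Strict Implicit. Unset Printing Implicit Defensive.
Import Order.TTheory GRing.Theory Num.Theory.
Local Open Scope ring_scope.

Definition M2 := 'M[algC]_2.

Definition mx2 (a b c d : algC) : M2 :=
  \matrix_(i < 2, j < 2)
    if (i == 0 :> nat) then (if (j == 0 :> nat) then a else b)
    else (if (j == 0 :> nat) then c else d).

Definition Amx : M2 := mx2 1 1 0 1.
Definition Bmx : M2 := mx2 1 0 (1 + 'i) 1.

Inductive gen (S : M2 -> Prop) : M2 -> Prop :=
  | gen_one : gen S 1
  | gen_mul s g : S s -> gen S g -> gen S (s * g)
  | gen_mulV s g : S s -> gen S g -> gen S (s^-1 * g).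

(* The preimage in SL_2 of a subgroup <X1,...> of PSL_2 is <x1, ..., -1>. *)
Definition gen2pm (x y : M2) : M2 -> Prop :=
  gen (fun s => s = x \/ s = y \/ s = -1).

Definition GammaT : M2 -> Prop := gen2pm Amx Bmx.

(* x in SL_2 represents a parabolic element of PSL_2:
   non-identity (x <> +-1) and tr^2 = 4. *)
Definition parabolic (x : M2) : Prop :=
  x <> 1 /\ x <> -1 /\ (\tr x) ^+ 2 = 4.

(* Main.v *)
From Stdlib Require Import Ring ZArith Lia.
Require Import Defs.
From HB Require Import structures.
From mathcomp Require Import all_boot all_order all_algebra all_field.
Import GRing.Theory Num.Theory.
Delimit Scope Z_scope with ZZ.
Local Open Scope ring_scope.

Definition cadd (x y : algC) : algC := x + y.
Definition cmul (x y : algC) : algC := x * y.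
Definition copp (x : algC) : algC := - x.
Definition csub (x y : algC) : algC := x - y.
Definition czero : algC := 0.
Definition cone : algC := 1.
Lemma addE (x y : algC) : x + y = cadd x y. Proof. by []. Qed.
Lemma mulE (x y : algC) : x * y = cmul x y. Proof. by []. Qed.
Lemma oppE (x : algC) : - x = copp x. Proof. by []. Qed.
Lemma zeroE : 0 = czero. Proof. by []. Qed.
Lemma oneE : 1 = cone. Proof. by []. Qed.
Lemma cE (x y : algC) : cadd czero x = cadd czero y -> x = y. Proof. by rewrite /cadd /czero !add0r. Qed.
Lemma algCrt : @ring_theory algC czero cone cadd cmul csub copp (@eq algC).
Proof. split; rewrite /cadd /cmul /csub /copp /czero /cone.
move=> x; exact: add0r.
move=> x y; exact: addrC.
move=> x y z; exact: addrA.
move=> x; exact: mul1r.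
move=> x y; exact: mulrC.
move=> x y z; exact: mulrA.
move=> x y z; exact: mulrDl.
by [].
move=> x; exact: subrr.
Qed.
Add Ring algCring : algCrt.
Ltac cring := apply: cE; rewrite ?addE ?mulE ?oppE ?zeroE ?oneE; ring.


Lemma mx2E (M : M2) : M = mx2 (M ord0 ord0) (M ord0 ord_max) (M ord_max ord0) (M ord_max ord_max).
Proof. apply/matrixP => i j; rewrite !mxE.
by case: i => [[|[|?]] Hi]; case: j => [[|[|?]] Hj] //=; congr (M _ _); apply: val_inj. Qed.

Lemma mx2M a b c d e f g h : mx2 a b c d * mx2 e f g h = mx2 (a*e+b*g) (a*f+b*h) (c*e+d*g) (c*f+d*h).
Proof.
apply/matrixP => i j; rewrite !mxE !big_ord_recl big_ord0 !mxE /=.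
by case: i => [[|[|?]] ?]; case: j => [[|[|?]] ?] //=; rewrite addr0.
Qed.


Lemma twoE : (2 : algC) = 1 + 1. Proof. by rewrite mulr2n. Qed.
Lemma fourE : (4 : algC) = 1 + 1 + 1 + 1. Proof. by rewrite !mulrS mulr0n addr0 !addrA. Qed.
Ltac cring ::= apply: cE; rewrite ?twoE ?fourE ?addE ?mulE ?oppE ?zeroE ?oneE; ring.

Definition zr (z : Z) : algC := (Z.to_nat z)%:R - (Z.to_nat (- z)%ZZ)%:R.

Lemma zr_nat (n m : nat) : zr (Z.of_nat n - Z.of_nat m)%ZZ = n%:R - m%:R.
Proof.
rewrite /zr.
have -> : Z.to_nat (Z.of_nat n - Z.of_nat m)%ZZ = (n - m)%N by rewrite /subn /subn_rec; lia.
have -> : Z.to_nat (- (Z.of_nat n - Z.of_nat m))%ZZ = (m - n)%N by rewrite /subn /subn_rec; lia.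
case: (leqP m n) => H.
  have E : (m - n)%N = 0%N by apply/eqP; rewrite subn_eq0.
  by rewrite E natrB // subr0.
have E : (n - m)%N = 0%N by apply/eqP; rewrite subn_eq0; apply: ltnW.
by rewrite E natrB ?sub0r ?opprB //; apply: ltnW.
Qed.
Lemma zr_dec (z : Z) : z = (Z.of_nat (Z.to_nat z) - Z.of_nat (Z.to_nat (- z)%ZZ))%ZZ.
Proof. lia. Qed.

Lemma zrD a b : zr (a + b)%ZZ = zr a + zr b.
Proof.
rewrite (zr_dec a) (zr_dec b).
set na := Z.to_nat a; set ma := Z.to_nat (-a)%ZZ; set nb := Z.to_nat b; set mb := Z.to_nat (-b)%ZZ.
have -> : (Z.of_nat na - Z.of_nat ma + (Z.of_nat nb - Z.of_nat mb))%ZZ =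
  (Z.of_nat (na + nb) - Z.of_nat (ma + mb))%ZZ by rewrite /addn /addn_rec; lia.
rewrite !zr_nat !natrD. cring.
Qed.

Lemma zrM a b : zr (a * b)%ZZ = zr a * zr b.
Proof.
rewrite (zr_dec a) (zr_dec b).
set na := Z.to_nat a; set ma := Z.to_nat (-a)%ZZ; set nb := Z.to_nat b; set mb := Z.to_nat (-b)%ZZ.
have -> : ((Z.of_nat na - Z.of_nat ma) * (Z.of_nat nb - Z.of_nat mb))%ZZ =
  (Z.of_nat (na * nb + ma * mb) - Z.of_nat (na * mb + ma * nb))%ZZ
  by rewrite /addn /addn_rec /muln /muln_rec; lia.
rewrite !zr_nat !natrD !natrM. cring.
Qed.

Lemma zr0 : zr 0 = 0. Proof. by rewrite /zr /= subr0. Qed.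
Lemma zr1 : zr 1 = 1. Proof. by rewrite /zr /= subr0. Qed.
Lemma zrN a : zr (- a)%ZZ = - zr a.
Proof. apply/eqP; rewrite -addr_eq0 -zrD Z.add_opp_diag_l zr0 //. Qed.

Lemma zr_inj a b : zr a = zr b -> a = b.
Proof.
move=> H.
have H0 : zr (a - b)%ZZ = 0 by rewrite -Z.add_opp_r zrD zrN H subrr.
move: H0; rewrite (zr_dec (a - b)%ZZ) zr_nat => /eqP; rewrite subr_eq0 eqr_nat => /eqP E.
lia.
Qed.

Lemma zr_conj a : (zr a)^* = zr a.
Proof. by rewrite /zr rmorphB /= !conjC_nat. Qed.

Definition gi (z : algC) := exists a b : Z, z = zr a + zr b * 'i.

Lemma gi_sep a b c d : zr a + zr b * 'i = zr c + zr d * 'i -> a = c /\ b = d.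
Proof.
move=> H.
have H1 : zr a - zr c = (zr d - zr b) * 'i.
  rewrite -[zr a](addrK (zr b * 'i)) H; cring.
have H2 : zr a - zr c = - ((zr d - zr b) * 'i).
  have E1 : zr a - zr c = zr (a - c)%ZZ by rewrite -Z.add_opp_r zrD zrN.
  have E2 : zr d - zr b = zr (d - b)%ZZ by rewrite -Z.add_opp_r zrD zrN.
  have := congr1 Num.conj H1. rewrite E1 E2 rmorphM /= !zr_conj conjCi mulrN //.
have Hy : zr d - zr b = 0.
  have : (zr d - zr b) * 'i *+ 2 = 0.
    by rewrite mulr2n -{1}H1; apply/eqP; rewrite addr_eq0 -H2.
  move/eqP; rewrite -mulr_natr mulf_eq0 => /orP [|]; last by rewrite pnatr_eq0.
  by rewrite mulf_eq0 (negbTE (neq0Ci _)) orbF => /eqP.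
have Hx : zr a - zr c = 0 by rewrite H1 Hy mul0r.
move/eqP: Hx; move/eqP: Hy; rewrite !subr_eq0 => /eqP Hy /eqP Hx.
by split; apply: zr_inj.
Qed.
Lemma zrm1 : zr (-1)%ZZ = -1. Proof. by rewrite /zr /= sub0r. Qed.
Lemma gi_zr a : gi (zr a). Proof. by exists a, 0%ZZ; rewrite zr0 mul0r addr0. Qed.
Lemma gi0 : gi 0. Proof. by rewrite -zr0; apply: gi_zr. Qed.
Lemma gi1 : gi 1. Proof. by rewrite -zr1; apply: gi_zr. Qed.
Lemma giI : gi 'i. Proof. by exists 0%ZZ, 1%ZZ; rewrite zr0 zr1 add0r mul1r. Qed.
Lemma giD x y : gi x -> gi y -> gi (x + y).
Proof.
move=> [a [b ->]] [c [d ->]]; exists (a + c)%ZZ, (b + d)%ZZ; rewrite !zrD; cring.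
Qed.
Lemma giN x : gi x -> gi (- x).
Proof. move=> [a [b ->]]; exists (- a)%ZZ, (- b)%ZZ; rewrite !zrN; cring. Qed.
Lemma giB x y : gi x -> gi y -> gi (x - y).
Proof. by move=> hx hy; apply: giD => //; apply: giN. Qed.
Lemma gmul (x y u v : algC) : (x + y * 'i) * (u + v * 'i) = (x * u - y * v) + (x * v + y * u) * 'i.
Proof.
transitivity (x*u + (x*v + y*u)*'i + y*v*('i*'i)); first cring.
rewrite mulCii; cring.
Qed.
Lemma giM x y : gi x -> gi y -> gi (x * y).
Proof.
move=> [a [b ->]] [c [d ->]]; exists (a * c - b * d)%ZZ, (a * d + b * c)%ZZ.
rewrite gmul -!Z.add_opp_r !zrD !zrN !zrM; cring.
Qed.

Lemma gi_unit x y : gi x -> gi y -> x * y = 1 -> x = 1 \/ x = -1 \/ x = 'i \/ x = - 'i.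
Proof.
move=> [a [b ->]] [c [d ->]].
rewrite gmul => H.
have : (zr a * zr c - zr b * zr d) + (zr a * zr d + zr b * zr c) * 'i = zr 1 + zr 0 * 'i
  by rewrite H zr1 zr0 mul0r addr0.
clear H.
have -> : zr a * zr c - zr b * zr d = zr (a * c - b * d)%ZZ by rewrite -!Z.add_opp_r !zrD !zrN !zrM.
have -> : zr a * zr d + zr b * zr c = zr (a * d + b * c)%ZZ by rewrite !zrD !zrM.
move/gi_sep => [E1 E2].
have N : ((a*a + b*b) * (c*c + d*d) = 1)%ZZ.
  have -> : ((a*a + b*b) * (c*c + d*d) = (a*c - b*d)*(a*c - b*d) + (a*d + b*c)*(a*d+b*c))%ZZ by ring.
  by rewrite E1 E2.
have N2 : (a*a + b*b = 1)%ZZ.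
  have h1 : (0 <= a*a + b*b)%ZZ by nia.
  by case: (Z.eq_mul_1_nonneg _ _ h1 N).
have : ((a = 1 /\ b = 0) \/ (a = -1 /\ b = 0) \/ (a = 0 /\ b = 1) \/ (a = 0 /\ b = -1))%ZZ by nia.
move=> [[-> ->]|[[-> ->]|[[-> ->]|[-> ->]]]].
- by left; rewrite zr1 zr0 mul0r addr0.
- by right; left; rewrite zrm1 zr0 mul0r addr0.
- by right; right; left; rewrite zr1 zr0 mul1r add0r.
- by right; right; right; rewrite zrm1 zr0 mulN1r add0r.
Qed.
Definition unitZ (u : algC) := exists a b : Z, u = zr a + zr b * 'i /\
  ((a = 1 /\ b = 0) \/ (a = -1 /\ b = 0) \/ (a = 0 /\ b = 1) \/ (a = 0 /\ b = -1))%ZZ.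

Lemma gi_unitZ x y : gi x -> gi y -> x * y = 1 -> unitZ x.
Proof.
move=> gx gy H; case: (gi_unit _ _ gx gy H) => [->|[->|[->|->]]].
- by exists 1%ZZ, 0%ZZ; rewrite zr1 zr0 mul0r addr0; split => //; lia.
- by exists (-1)%ZZ, 0%ZZ; rewrite zrm1 zr0 mul0r addr0; split => //; lia.
- by exists 0%ZZ, 1%ZZ; rewrite zr1 zr0 mul1r add0r; split => //; lia.
- by exists 0%ZZ, (-1)%ZZ; rewrite zrm1 zr0 mulN1r add0r; split => //; lia.
Qed.

Definition Cc : algC := 1 + 'i.
Definition Cb : algC := 1 - 'i.
Lemma CCb : Cc * Cb = 2.
Proof. rewrite /Cc /Cb. transitivity (1 - 'i * 'i : algC); first cring. rewrite mulCii; cring. Qed.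
Lemma Cc_neq0 : Cc != 0.
Proof. apply/eqP => H; have := CCb; rewrite H mul0r => /eqP; by rewrite eq_sym pnatr_eq0. Qed.
Lemma zr2 : zr 2 = 2. Proof. by rewrite /zr /= subr0. Qed.

Lemma keyZ T P Q : gi T -> unitZ P -> unitZ Q -> Cc * (Cb * Cb - T * T) = Q - P -> P = Q.
Proof.
move=> [x [y ->]] [a [b [-> HP]]] [c [d [-> HQ]]] H.
suff [-> ->] : a = c /\ b = d by [].
have E : Cc * (Cb * Cb - (zr x + zr y * 'i) * (zr x + zr y * 'i)) =
   zr (y*y - x*x + 2 + 2*x*y)%ZZ + zr (y*y - x*x - 2 - 2*x*y)%ZZ * 'i.
  have h1 : Cb * Cb - (zr x + zr y * 'i) * (zr x + zr y * 'i) =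
     (1*1 - (-1)*(-1) - (zr x * zr x - zr y * zr y)) + (1*(-1) + (-1)*1 - (zr x * zr y + zr y * zr x)) * 'i.
    have eCb : Cb = 1 + (-1) * 'i by rewrite /Cb; cring.
    rewrite eCb !gmul; cring.
  have eC : Cc = 1 + 1 * 'i by rewrite /Cc mul1r.
  rewrite h1 eC gmul -!Z.add_opp_r !zrD !zrN !zrM zr2; cring.
have E2 : zr c + zr d * 'i - (zr a + zr b * 'i) = zr (c - a)%ZZ + zr (d - b)%ZZ * 'i
  by rewrite -!Z.add_opp_r !zrD !zrN; cring.
move: H; rewrite E E2 => /gi_sep [E3 E4].
destruct (Z.eq_dec (x*y) (-1)) as [e|ne].
- have hx : (x * x = 1 /\ y * y = 1)%ZZ.
    have e1 : (x * (- y) = 1)%ZZ by lia.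
    case: (Z.eq_mul_1 _ _ e1) => ->; nia.
  lia.
- lia.
Qed.
Lemma mx2_inj a b c d a' b' c' d' : mx2 a b c d = mx2 a' b' c' d' ->
  [/\ a = a', b = b', c = c' & d = d'].
Proof.
move/matrixP => H.
have := H ord0 ord0; have := H ord0 ord_max; have := H ord_max ord0; have := H ord_max ord_max.
by rewrite !mxE /= => -> -> -> ->.
Qed.

Lemma mx2_1 : (1 : M2) = mx2 1 0 0 1.
Proof. apply/matrixP => i j; rewrite !mxE; by case: i => [[|[|?]] ?]; case: j => [[|[|?]] ?]. Qed.

Lemma mx2_N a b c d : - mx2 a b c d = mx2 (-a) (-b) (-c) (-d).
Proof. apply/matrixP => i j; rewrite !mxE; by case: i => [[|[|?]] ?]; case: j => [[|[|?]] ?]. Qed.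

Lemma mx2_N1 : (-1 : M2) = mx2 (-1) 0 0 (-1).
Proof. by rewrite mx2_1 mx2_N oppr0. Qed.

Lemma tr_mx2 a b c d : \tr (mx2 a b c d) = a + d.
Proof. by rewrite /mxtrace !big_ord_recl big_ord0 !mxE /= addr0. Qed.

Lemma mx2_inv a b c d : a * d - b * c = 1 -> (mx2 a b c d)^-1 = mx2 d (-b) (-c) a.
Proof.
move=> Hd.
have H1 : mx2 a b c d * mx2 d (-b) (-c) a = 1.
  rewrite mx2M mx2_1 -Hd; congr mx2; cring.
have H2 : mx2 d (-b) (-c) a * mx2 a b c d = 1.
  rewrite mx2M mx2_1 -Hd; congr mx2; cring.
have U : mx2 a b c d \is a GRing.unit by apply/unitrP; exists (mx2 d (-b) (-c) a).
by rewrite -[_^-1]mulr1 -H1 mulKr.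
Qed.
Definition lamd (M : M2) := exists s p q r, [/\ gi s, gi p, gi q, gi r &
  M = mx2 (s + Cc * p) q (Cc * r) s /\ (s + Cc * p) * s - q * (Cc * r) = 1].

Lemma giC : gi Cc. Proof. exact: giD gi1 giI. Qed.

Lemma lamd_mul M N : lamd M -> lamd N -> lamd (M * N).
Proof.
move=> [s [p [q [r [gs gp gq gr [-> dM]]]]]] [s' [p' [q' [r' [gs' gp' gq' gr' [-> dN]]]]]].
exists (Cc * r * q' + s * s'), (p * s' + s * p' + Cc * p * p' + q * r' - r * q'),
  ((s + Cc * p) * q' + q * s'), (r * (s' + Cc * p') + s * r').
split.
- by apply: giD; [apply: giM; [apply: giM; [exact: giC|]|]|apply: giM].
- apply: giB; last exact: giM.
  apply: giD; last exact: giM.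
  apply: giD; last by apply: giM => //; apply: giM => //; exact: giC.
  by apply: giD; apply: giM.
- apply: giD; last exact: giM.
  by apply: giM => //; apply: giD => //; apply: giM => //; exact: giC.
- apply: giD; last exact: giM.
  by apply: giM => //; apply: giD => //; apply: giM => //; exact: giC.
split.
  rewrite mx2M; congr mx2; cring.
transitivity (((s + Cc * p) * s - q * (Cc * r)) * ((s' + Cc * p') * s' - q' * (Cc * r'))); first cring.
by rewrite dM dN mulr1.
Qed.

Lemma lamd1 : lamd 1.
Proof.
exists 1, 0, 0, 0; split; [exact: gi1|exact: gi0|exact: gi0|exact: gi0|].
split; [rewrite mx2_1; congr mx2; cring | cring].
Qed.

Lemma lamd_gen s0 p0 q0 r0 M : gi s0 -> gi p0 -> gi q0 -> gi r0 ->
  M = mx2 (s0 + Cc * p0) q0 (Cc * r0) s0 -> (s0 + Cc * p0) * s0 - q0 * (Cc * r0) = 1 -> lamd M.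
Proof. move=> *; exists s0, p0, q0, r0; by split. Qed.

Lemma lamdA : lamd Amx.
Proof.
apply: (@lamd_gen (1) (0) (1) (0)); try exact: gi1; try exact: gi0.
  rewrite /Amx; congr mx2; cring.
cring.
Qed.

Lemma lamdB : lamd Bmx.
Proof.
apply: (@lamd_gen (1) (0) (0) (1)); try exact: gi1; try exact: gi0.
  rewrite /Bmx /Cc; congr mx2; cring.
cring.
Qed.

Lemma lamdAV : lamd Amx^-1.
Proof.
rewrite /Amx mx2_inv; last cring.
apply: (@lamd_gen (1) (0) (-1) (0)); try exact: gi1; try exact: gi0.
  exact: giN gi1.
  congr mx2; cring.
cring.
Qed.

Lemma lamdBV : lamd Bmx^-1.
Proof.
rewrite /Bmx mx2_inv; last cring.
apply: (@lamd_gen (1) (0) (0) (-1)); try exact: gi1; try exact: gi0.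
  exact: giN gi1.
  rewrite /Cc; congr mx2; cring.
cring.
Qed.

Lemma lamdN1 : lamd (-1).
Proof.
rewrite mx2_N1.
apply: (@lamd_gen (-1) (0) (0) (0)); try exact: gi0.
  exact: giN gi1.
  congr mx2; cring.
cring.
Qed.

Lemma GammaT_lamd M : GammaT M -> lamd M.
Proof.
elim => [|s g Hs _ IH|s g Hs _ IH]; first exact: lamd1.
- apply: lamd_mul => //.
  by case: Hs => [->|[->|->]]; [exact: lamdA|exact: lamdB|exact: lamdN1].
- apply: lamd_mul => //.
  case: Hs => [->|[->|->]]; [exact: lamdAV|exact: lamdBV|].
  by rewrite invrN1; exact: lamdN1.
Qed.
Definition comb (a b c d e f g h al be ga de : algC) : M2 :=
  mx2 (al + be*a + ga*e + de*(a*e+b*g)) (be*b + ga*f + de*(a*f+b*h))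
      (be*c + ga*g + de*(c*e+d*g)) (al + be*d + ga*h + de*(c*f+d*h)).

Lemma combX a b c d e f g h al be ga de :
  mx2 a b c d * comb a b c d e f g h al be ga de =
  comb a b c d e f g h (-(be*(a*d-b*c))) (al + be*(a+d)) (-(de*(a*d-b*c))) (ga + de*(a+d)).
Proof. rewrite mx2M /comb; congr mx2; cring. Qed.

Lemma combXV (a b c d e f g h al be ga de : algC) :
  mx2 d (-b) (-c) a * comb a b c d e f g h al be ga de =
  comb a b c d e f g h ((a+d)*al + be*(a*d-b*c)) (-al) ((a+d)*ga + de*(a*d-b*c)) (-ga).
Proof. rewrite mx2M /comb; congr mx2; cring. Qed.

Lemma combY a b c d e f g h al be ga de :
  mx2 e f g h * comb a b c d e f g h al be ga de =
  comb a b c d e f g h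
   (be*((a*e+b*g+c*f+d*h) - (a+d)*(e+h)) - ga*(e*h-f*g) - de*(a+d)*(e*h-f*g))
   (be*(e+h) + de*(e*h-f*g))
   (al + be*(a+d) + ga*(e+h) + de*(a*e+b*g+c*f+d*h)) (-be).
Proof. rewrite mx2M /comb; congr mx2; cring. Qed.

Lemma combYV (a b c d e f g h al be ga de : algC) :
  mx2 h (-f) (-g) e * comb a b c d e f g h al be ga de =
  comb a b c d e f g h
   ((e+h)*al - be*((a*e+b*g+c*f+d*h) - (a+d)*(e+h)) + ga*(e*h-f*g) + de*(a+d)*(e*h-f*g))
   (-(de*(e*h-f*g)))
   (-al - be*(a+d) - de*(a*e+b*g+c*f+d*h)) ((e+h)*de + be).
Proof. rewrite mx2M /comb; congr mx2; cring. Qed.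

Lemma combN (a b c d e f g h al be ga de : algC) :
  (-1) * comb a b c d e f g h al be ga de = comb a b c d e f g h (-al) (-be) (-ga) (-de).
Proof. rewrite mx2_N1 mx2M /comb; congr mx2; cring. Qed.
Ltac gauto := repeat first [assumption | exact: gi0 | exact: gi1 | exact: giC | apply: giD | apply: giM | apply: giN ].

Definition spn a b c d e f g h (M : M2) := exists al be ga de,
  [/\ gi al, gi be, gi ga & gi de] /\ M = comb a b c d e f g h al be ga de.

Lemma gen_sp (a b c d e f g h : algC) : a*d - b*c = 1 -> e*h - f*g = 1 -> gi (a+d) -> gi (e+h) ->
  gi (a*e+b*g+c*f+d*h) ->
  forall M, gen2pm (mx2 a b c d) (mx2 e f g h) M -> spn a b c d e f g h M.
Proof.
move=> dX dY gt gu gz M; elim => [|s M' Hs _ [al [be [ga [de [[g1 g2 g3 g4] ->]]]]]|s M' Hs _ [al [be [ga [de [[g1 g2 g3 g4] ->]]]]]].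
- exists 1, 0, 0, 0; split; first by split; gauto.
  by rewrite mx2_1 /comb; congr mx2; cring.
- case: Hs => [->|[->|->]].
  + rewrite combX dX; eexists _, _, _, _; split; last reflexivity. by split; gauto.
  + rewrite combY dY; eexists _, _, _, _; split; last reflexivity. by split; gauto.
  + rewrite combN; eexists _, _, _, _; split; last reflexivity. by split; gauto.
- case: Hs => [->|[->|->]].
  + rewrite mx2_inv // combXV dX; eexists _, _, _, _; split; last reflexivity. by split; gauto.
  + rewrite mx2_inv // combYV dY; eexists _, _, _, _; split; last reflexivity. by split; gauto.
  + rewrite invrN1 combN; eexists _, _, _, _; split; last reflexivity. by split; gauto.
Qed.
Definition det3 (x1 x2 x3 y1 y2 y3 z1 z2 z3 : algC) : algC :=
  x1*(y2*z3 - y3*z2) - x2*(y1*z3 - y3*z1) + x3*(y1*z2 - y2*z1).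

Lemma det3_mul (k11 k12 k13 k21 k22 k23 k31 k32 k33 v11 v12 v13 v21 v22 v23 v31 v32 v33 : algC) :
  det3 (k11*v11 + k12*v21 + k13*v31) (k11*v12 + k12*v22 + k13*v32) (k11*v13 + k12*v23 + k13*v33)
       (k21*v11 + k22*v21 + k23*v31) (k21*v12 + k22*v22 + k23*v32) (k21*v13 + k22*v23 + k23*v33)
       (k31*v11 + k32*v21 + k33*v31) (k31*v12 + k32*v22 + k33*v32) (k31*v13 + k32*v23 + k33*v33)
  = det3 k11 k12 k13 k21 k22 k23 k31 k32 k33 * det3 v11 v12 v13 v21 v22 v23 v31 v32 v33.
Proof. rewrite /det3; cring. Qed.

Lemma psi_comb (a b c d e f g h al be ga de : algC) (M : M2) : M = comb a b c d e f g h al be ga de ->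
  [/\ M ord0 ord_max = be*b + ga*f + de*(a*f+b*h), M ord_max ord0 = be*c + ga*g + de*(c*e+d*g) &
      M ord_max ord_max - M ord0 ord0 = be*(d-a) + ga*(h-e) + de*((c*f+d*h) - (a*e+b*g))].
Proof. move=> ->; rewrite /comb !mxE /=; split; cring. Qed.

Lemma D_gen (a b c d e f g h : algC) :
  det3 b c (d-a) f g (h-e) (a*f+b*h) (c*e+d*g) ((c*f+d*h) - (a*e+b*g)) =
  2*2*(a*d-b*c)*(e*h-f*g) - (a+d)*(a+d)*(e*h-f*g) - (e+h)*(e+h)*(a*d-b*c)
  - ((a*e+b*g)+(c*f+d*h))*((a*e+b*g)+(c*f+d*h)) + (a+d)*(e+h)*((a*e+b*g)+(c*f+d*h)).
Proof. rewrite /det3; cring. Qed.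
Theorem theorem1p3 (x y : M2) :
  GammaT x -> GammaT y ->
  (forall z : M2, gen2pm x y z <-> GammaT z) ->
  (\tr x = \tr y \/ \tr x = - \tr y) ->
  parabolic x /\ parabolic y.
Proof.
move=> Hx Hy Hg Htr.
have Lxy : lamd (x * y) by apply: lamd_mul; apply: GammaT_lamd.
move: (GammaT_lamd _ Hx) => [s1 [p1 [q1 [r1 [gs1 gp1 gq1 gr1 [ex dx]]]]]].
move: (GammaT_lamd _ Hy) => [s2 [p2 [q2 [r2 [gs2 gp2 gq2 gr2 [ey dy]]]]]].
move: Lxy => [s3 [p3 [q3 [r3 [gs3 gp3 gq3 gr3 [exy _]]]]]].
subst x y.
move: exy; rewrite mx2M => /mx2_inj [e1 e2 e3 e4].
have gt : gi (s1 + Cc * p1 + s1) by gauto.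
have gu : gi (s2 + Cc * p2 + s2) by gauto.
have gz : gi ((s1 + Cc * p1) * (s2 + Cc * p2) + q1 * (Cc * r2) + Cc * r1 * q2 + s1 * s2) by gauto.
have GA : GammaT Amx by rewrite -[Amx]mulr1; apply: gen_mul; [left|exact: gen_one].
have GB : GammaT Bmx by rewrite -[Bmx]mulr1; apply: gen_mul; [right; left|exact: gen_one].
have GAB : GammaT (Amx * Bmx).
  rewrite -[Bmx]mulr1; apply: gen_mul; first by left.
  by apply: gen_mul; [right; left|exact: gen_one].
have SP := @gen_sp _ _ _ _ _ _ _ _ dx dy gt gu gz.
move: (SP _ (proj2 (Hg _) GA)) => [al1 [be1 [ga1 [de1 [[_ gb1 gc1 gd1] EA]]]]].
move: (SP _ (proj2 (Hg _) GB)) => [al2 [be2 [ga2 [de2 [[_ gb2 gc2 gd2] EB]]]]].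
move: (SP _ (proj2 (Hg _) GAB)) => [al3 [be3 [ga3 [de3 [[_ gb3 gc3 gd3] EAB]]]]].
move: (@psi_comb _ _ _ _ _ _ _ _ _ _ _ _ _ EA) (@psi_comb _ _ _ _ _ _ _ _ _ _ _ _ _ EB) (@psi_comb _ _ _ _ _ _ _ _ _ _ _ _ _ EAB) => [A1 A2 A3] [B1 B2 B3] [X1 X2 X3].
rewrite e1 e2 e3 e4 in A1 A2 A3 B1 B2 B3 X1 X2 X3.
pose D := det3 q1 (Cc * r1) (s1 - (s1 + Cc * p1)) q2 (Cc * r2) (s2 - (s2 + Cc * p2))
               q3 (Cc * r3) (s3 - (s3 + Cc * p3)).
pose kK := det3 be1 ga1 de1 be2 ga2 de2 be3 ga3 de3.
pose kK' := det3 q1 r1 p1 q2 r2 p2 q3 r3 p3.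
have C1 : det3 (Amx ord0 ord_max) (Amx ord_max ord0) (Amx ord_max ord_max - Amx ord0 ord0)
  (Bmx ord0 ord_max) (Bmx ord_max ord0) (Bmx ord_max ord_max - Bmx ord0 ord0)
  ((Amx * Bmx) ord0 ord_max) ((Amx * Bmx) ord_max ord0)
  ((Amx * Bmx) ord_max ord_max - (Amx * Bmx) ord0 ord0) = kK * D.
  by rewrite A1 A2 A3 B1 B2 B3 X1 X2 X3 det3_mul.
have C1v : det3 (Amx ord0 ord_max) (Amx ord_max ord0) (Amx ord_max ord_max - Amx ord0 ord0)
  (Bmx ord0 ord_max) (Bmx ord_max ord0) (Bmx ord_max ord_max - Bmx ord0 ord0)
  ((Amx * Bmx) ord0 ord_max) ((Amx * Bmx) ord_max ord0)
  ((Amx * Bmx) ord_max ord_max - (Amx * Bmx) ord0 ord0) = - (Cc * Cc).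
  by rewrite /Amx /Bmx mx2M /mx2 !mxE /= /det3 /Cc; cring.
have C2 : D = kK' * (- (Cc * Cc)) by rewrite /D /kK' /det3; cring.
have CC0 : Cc * Cc != 0 by rewrite mulf_neq0 // Cc_neq0.
have Hkk : kK * kK' = 1.
  have NC : - (Cc * Cc) != 0 by rewrite oppr_eq0.
  apply: (mulIf NC) => /=.
  by rewrite mul1r -mulrA -C2 -C1 C1v.
have gk : gi kK by rewrite /kK /det3; gauto.
have gk' : gi kK' by rewrite /kK' /det3; gauto.
have DF := D_gen (s1 + Cc * p1) q1 (Cc * r1) s1 (s2 + Cc * p2) q2 (Cc * r2) s2.
rewrite e1 e2 e3 e4 dx dy -/D in DF.
have D0 : D != 0.
  rewrite C2 mulf_neq0 // ?oppr_eq0 //.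
  by apply/eqP => k0; move: Hkk; rewrite k0 mulr0 => /eqP; rewrite eq_sym oner_eq0.
have gCb : gi Cb by rewrite /Cb; apply: giD; [exact: gi1|apply: giN; exact: giI].
pose T := Cb * s1 + p1.
pose Z3 := Cb * s3 + p3.
have gT : gi T by rewrite /T; gauto.
have gZ : gi Z3 by rewrite /Z3; gauto.
have ht : s1 + Cc * p1 + s1 = Cc * T.
  rewrite /T; transitivity (Cc * Cb * s1 + Cc * p1); last cring.
  rewrite CCb; cring.
have hz : s3 + Cc * p3 + s3 = Cc * Z3.
  rewrite /Z3; transitivity (Cc * Cb * s3 + Cc * p3); last cring.
  rewrite CCb; cring.
rewrite !tr_mx2 in Htr.
have [W [gW HW]] : exists W, gi W /\ D = 2 * 2 - Cc * T * (Cc * T) - Cc * T * (Cc * T)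
    - Cc * W * (Cc * W) + Cc * T * (Cc * T) * (Cc * W).
  case: Htr => Ht.
    exists Z3; split => //; rewrite DF -Ht ht hz; cring.
  have Hu : s2 + Cc * p2 + s2 = - (s1 + Cc * p1 + s1) by rewrite Ht opprK.
  exists (- Z3); split; first exact: giN.
  rewrite DF Hu ht hz; cring.
pose P := W - Cb.
pose Q := W + Cb - Cc * T * T.
have gP : gi P by rewrite /P; gauto.
have gQ : gi Q by rewrite /Q; gauto.
have HPQ : Cc * Cc * (P * Q) = Cc * Cc * kK'.
  transitivity (- D); last by rewrite C2; cring.
  rewrite HW /P /Q.
  transitivity (Cc * Cc * (W * W) - (Cc * Cb) * (Cc * Cb) + (Cc * Cb) * (Cc * T * T) * Cc
     - Cc * Cc * Cc * T * T * W); first cring.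
  rewrite CCb; cring.
have PQ : P * Q = kK' by apply: (mulfI CC0).
have uP : unitZ P.
  apply: (@gi_unitZ _ (Q * kK)) => //; first by gauto.
  by rewrite mulrA PQ mulrC Hkk.
have uQ : unitZ Q.
  apply: (@gi_unitZ _ (P * kK)) => //; first by gauto.
  by rewrite mulrA [Q * P]mulrC PQ mulrC Hkk.
have HQP : Cc * (Cb * Cb - T * T) = Q - P.
  rewrite /P /Q; transitivity (Cc * Cb * Cb - Cc * T * T); first cring.
  rewrite CCb; cring.
have EPQ := keyZ _ _ _ gT uP uQ HQP.
have TT : T * T = Cb * Cb.
  move: HQP; rewrite EPQ subrr => /eqP; rewrite mulf_eq0 (negbTE Cc_neq0) /= subr_eq0 => /eqP.
  by move=> ->.
have t4 : (s1 + Cc * p1 + s1) * (s1 + Cc * p1 + s1) = 4.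
  rewrite ht; transitivity (Cc * Cc * (T * T)); first cring.
  rewrite TT; transitivity ((Cc * Cb) * (Cc * Cb)); first cring.
  rewrite CCb; cring.
have u4 : (s2 + Cc * p2 + s2) * (s2 + Cc * p2 + s2) = 4.
  case: Htr => Ht; first by rewrite -Ht t4.
  by rewrite -mulrNN -Ht t4.
split; split.
- move=> E; move/eqP: D0; apply; move: E; rewrite mx2_1 => /mx2_inj [E1 E2 E3 E4].
  rewrite /D E1 E2 E3 E4 /det3; cring.
- split.
  + move=> E; move/eqP: D0; apply; move: E; rewrite mx2_N1 => /mx2_inj [E1 E2 E3 E4].
    rewrite /D E1 E2 E3 E4 /det3; cring.
  + by rewrite tr_mx2 expr2.
- move=> E; move/eqP: D0; apply; move: E; rewrite mx2_1 => /mx2_inj [E1 E2 E3 E4].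
  rewrite /D E1 E2 E3 E4 /det3; cring.
- split.
  + move=> E; move/eqP: D0; apply; move: E; rewrite mx2_N1 => /mx2_inj [E1 E2 E3 E4].
    rewrite /D E1 E2 E3 E4 /det3; cring.
  + by rewrite tr_mx2 expr2.
Qed.
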